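(* Consider a fair execution of Algorithm DLE from a permitted initial configuration $C_0$, and let $l$ be the point occupied by the elected leader when the algorithm terminates. When Algorithm DLE terminates, for every $i\in\{0,\dots,\epsilon_G(l)\}$ there exists a contracted particle occupying a point at grid distance $i$ from $l$; moreover, no particle occupies a point at grid distance greater than $\epsilon_G(l)$ from $l$.
   Context: Geometry. The triangular grid $G$ has as vertices (''points'') the points of the regular triangular lattice in the plane, adjacent iff at unit distance; each point has six incident edges, cyclically ordered clockwise. The grid distance $dist_G(u,v)$ is the shortest-path distance in $G$. A shape is a finite set of points (identified with its induced subgraph). For a connected shape $S$: the unbounded face is the outer face; a bounded face containing a grid point not in $S$ is a hole; the area of $S$ is $S$ with its hole points; the outer boundary is the set of points of $S$ on the boundary of the outer face; a boundary point is a point of $S$ adjacent to a point not in $S$. For a boundary point $v$, a local boundary $B$ of $v$ w.r.t. $S$ is a maximal clockwise cyclic interval of consecutive edges at $v$ leading to points not in $S$, with boundary count $c(v,B)=|B|-2$. $v$ is redundant if its neighbors in $S$ induce a connected subgraph; erodable if redundant and on the outer boundary (it then has a single local boundary $B$); SCE if erodable and $c(v,B)>0$. Model (amoebot, strong scheduler). Anonymous constant-memory particles each occupy one point (contracted) or two adjacent points (expanded; head and tail); no point is occupied twice. Ports $0,\dots,5$, common clockwise chirality, particles know neighbors' port numbers for common edges, read/write neighbors' memories. Moves: expansion into an adjacent empty point (new head), contraction, handover. Executions are sequences of atomic activations of single particles (read, compute, write, at most one move); fair if every particle is activated infinitely often. Permitted initial configuration $C_0$: all particles contracted, nonempty connected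 set $S_P(C_0)$ of occupied points; each particle knows for each port whether the adjacent point lies in the outer face of $S_P(C_0)$. The system's shape may become disconnected. Algorithm DLE. Maintains eligible set $S_e$, initially the area of $S_P(C_0)$; points are only removed. Particle $p$ has $status$ (initially $undecided$) and $eligible[0..5]$ (initially true iff the adjacent point is not in the outer face of $S_P(C_0)$). On activation: if expanded, contract into head; else if $p$ and all neighbors are decided, terminate; else if undecided and contracted at $v$: if no neighbor of $v$ is in $S_e$ (per $eligible$), become $leader$; else if $v$ is SCE w.r.t. $S_e$, remove $v$ from $S_e$ (neighbors whose head is adjacent to $v$ update their $eligible$ entry for $v$ to false), then if $v$ has an adjacent unoccupied point $u\in S_e$, set own $eligible$ entries to true except the one pointing from $u$ to $v$ (false) and expand into $u$, otherwise become $follower$. In any fair execution $S_e$ eventually equals a single point $l$, occupied by the unique leader. $\epsilon_G(l)=\max_{u\in S_P(C_0)} dist_G(l,u)$ is the eccentricity of $l$ w.r.t. $G$ in $C_0$. *)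

(* Defs.v *)
From Stdlib Require Import ZArith Arith.
Open Scope Z_scope.

(* Points of the regular triangular lattice in axial coordinates:
   (a,b) is the plane point a*(1,0) + b*(1/2, sqrt 3 / 2). *)
Definition Point : Type := (Z * Z)%type.

Definition padd (x y : Point) : Point := (fst x + fst y, snd x + snd y).

Definition peqb (x y : Point) : bool := Z.eqb (fst x) (fst y) && Z.eqb (snd x) (snd y).

(* The six unit vectors, listed in clockwise cyclic order (index taken mod 6). *)
Definition dvec (d : nat) : Point :=
  match Nat.modulo d 6 with
  | 0%nat => (1, 0)
  | 1%nat => (1, -1)
  | 2%nat => (0, -1)
  | 3%nat => (-1, 0)
  | 4%nat => (-1, 1)
  | _ => (0, 1)
  end.

Definition nbr (v : Point) (d : nat) : Point := padd v (dvec d).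

Definition adj (x y : Point) : Prop := exists d, (d < 6)%nat /\ y = nbr x d.

Inductive walk : Point -> Point -> nat -> Prop :=
| walk_nil : forall x, walk x x 0
| walk_cons : forall x y z n, adj x y -> walk y z n -> walk x z (S n).

Definition is_dist (u v : Point) (d : nat) : Prop :=
  walk u v d /\ forall d', walk u v d' -> (d <= d')%nat.

Definition shape := Point -> Prop.

Definition finite_shape (S : shape) : Prop :=
  exists l : list Point, forall x, S x -> List.In x l.

Inductive path_in (S : shape) : Point -> Point -> Prop :=
| path_in_refl : forall x, S x -> path_in S x x
| path_in_step : forall x y z, S x -> adj x y -> path_in S y z -> path_in S x z.

Definition connected (S : shape) : Prop :=
  forall x y, S x -> S y -> path_in S x y.

Definition pnorm (x : Point) : Z := Z.abs (fst x) + Z.abs (snd x).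

(* q lies in the outer (unbounded) face of S: q is not in S and q can be
   joined, avoiding S, to grid points arbitrarily far away. *)
Definition in_outer_face (S : shape) (q : Point) : Prop :=
  ~ S q /\ forall n : Z, exists r, path_in (fun x => ~ S x) q r /\ n <= pnorm r.

(* area of S: S together with its hole points (points not in S that lie in a
   bounded face) *)
Definition area (S : shape) : shape :=
  fun x => S x \/ (~ S x /\ ~ in_outer_face S x).

Definition outer_boundary (S : shape) (v : Point) : Prop :=
  S v /\ exists d, (d < 6)%nat /\ in_outer_face S (nbr v d).

Definition boundary_point (S : shape) (v : Point) : Prop :=
  S v /\ exists d, (d < 6)%nat /\ ~ S (nbr v d).

(* local boundary of v w.r.t. S: the maximal clockwise cyclic interval of the
   k consecutive edges at v in directions i, i+1, ..., i+k-1 (mod 6), all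
   leading to points not in S.  Its boundary count is k - 2. *)
Definition local_boundary (S : shape) (v : Point) (i k : nat) : Prop :=
  (i < 6)%nat /\ (1 <= k <= 6)%nat /\
  (forall j, (j < k)%nat -> ~ S (nbr v (i + j))) /\
  ((k < 6)%nat -> S (nbr v (i + 5)) /\ S (nbr v (i + k))).

Definition redundant (S : shape) (v : Point) : Prop :=
  connected (fun x => S x /\ adj v x).

Definition erodable (S : shape) (v : Point) : Prop :=
  boundary_point S v /\ redundant S v /\ outer_boundary S v.

(* strictly convex erodable: erodable with boundary count c(v,B) = |B|-2 > 0 *)
Definition SCE (S : shape) (v : Point) : Prop :=
  erodable S v /\ exists i k, local_boundary S v i k /\ (3 <= k)%nat.

Inductive Status := Undecided | Leader | Follower.

(* State of a particle.  [ps_tail = None] means contracted (occupying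
   [ps_head]); [Some t] means expanded with head [ps_head] and tail t.
   [ps_elig d] is the eligible entry for the port leading from the head to
   [nbr ps_head d] (ports are indexed by global direction; since all particles
   share chirality this is just a fixed relabelling of each particle's ports).
   [ps_term] records that the particle has terminated. *)
Record PState := mkPS {
  ps_head : Point;
  ps_tail : option Point;
  ps_status : Status;
  ps_elig : nat -> bool;
  ps_term : bool }.

(* A configuration, together with the (ghost) eligible set S_e. *)
Record Config (Part : Type) := mkC {
  cf_st : Part -> PState;
  cf_Se : shape }.
Arguments mkC {Part}.
Arguments cf_st {Part}.
Arguments cf_Se {Part}.

Definition occupies (s : PState) (x : Point) : Prop :=
  ps_head s = x \/ ps_tail s = Some x.

Definition occupied {Part : Type} (c : Config Part) : shape :=
  fun x => exists q, occupies (cf_st c q) x.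

Definition decided (s : PState) : Prop := ps_status s <> Undecided.

Definition pneighbor {Part : Type} (c : Config Part) (p q : Part) : Prop :=
  q <> p /\ exists x y, occupies (cf_st c p) x /\ occupies (cf_st c q) y /\ adj x y.

Definition others_same {Part : Type} (c c' : Config Part) (p : Part) : Prop :=
  forall q, q <> p -> cf_st c' q = cf_st c q.

Definition same_Se {Part : Type} (c c' : Config Part) : Prop :=
  forall x, cf_Se c' x <-> cf_Se c x.

Definition forget_point (v : Point) (s : PState) : PState :=
  mkPS (ps_head s) (ps_tail s) (ps_status s)
       (fun d => if peqb (nbr (ps_head s) d) v then false else ps_elig s d)
       (ps_term s).

Inductive dle_step {Part : Type} (c : Config Part) (p : Part) (c' : Config Part) : Prop :=
| st_terminated :
    ps_term (cf_st c p) = true -> c' = c -> dle_step c p c'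
| st_contract : forall t,
    ps_term (cf_st c p) = false ->
    ps_tail (cf_st c p) = Some t ->
    others_same c c' p -> same_Se c c' ->
    cf_st c' p = mkPS (ps_head (cf_st c p)) None (ps_status (cf_st c p))
                      (ps_elig (cf_st c p)) false ->
    dle_step c p c'
| st_finish :
    ps_term (cf_st c p) = false ->
    ps_tail (cf_st c p) = None ->
    decided (cf_st c p) ->
    (forall q, pneighbor c p q -> decided (cf_st c q)) ->
    others_same c c' p -> same_Se c c' ->
    cf_st c' p = mkPS (ps_head (cf_st c p)) None (ps_status (cf_st c p))
                      (ps_elig (cf_st c p)) true ->
    dle_step c p c'
| st_wait :
    ps_term (cf_st c p) = false ->
    ps_tail (cf_st c p) = None ->
    decided (cf_st c p) ->
    ~ (forall q, pneighbor c p q -> decided (cf_st c q)) ->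
    c' = c -> dle_step c p c'
(* undecided, contracted at v, no neighbour of v in S_e (per eligible):
   become leader *)
| st_leader :
    ps_term (cf_st c p) = false ->
    ps_tail (cf_st c p) = None ->
    ps_status (cf_st c p) = Undecided ->
    (forall d, (d < 6)%nat -> ps_elig (cf_st c p) d = false) ->
    others_same c c' p -> same_Se c c' ->
    cf_st c' p = mkPS (ps_head (cf_st c p)) None Leader
                      (ps_elig (cf_st c p)) false ->
    dle_step c p c'
| st_move : forall u,
    let v := ps_head (cf_st c p) in
    ps_term (cf_st c p) = false ->
    ps_tail (cf_st c p) = None ->
    ps_status (cf_st c p) = Undecided ->
    (exists d, (d < 6)%nat /\ ps_elig (cf_st c p) d = true) ->
    SCE (cf_Se c) v ->
    (forall x, cf_Se c' x <-> (cf_Se c x /\ x <> v)) ->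
    adj v u -> ~ occupied c u -> cf_Se c' u ->
    (forall q, q <> p -> cf_st c' q = forget_point v (cf_st c q)) ->
    cf_st c' p = mkPS u (Some v) Undecided
                      (fun d => negb (peqb (nbr u d) v)) false ->
    dle_step c p c'
| st_follower :
    let v := ps_head (cf_st c p) in
    ps_term (cf_st c p) = false ->
    ps_tail (cf_st c p) = None ->
    ps_status (cf_st c p) = Undecided ->
    (exists d, (d < 6)%nat /\ ps_elig (cf_st c p) d = true) ->
    SCE (cf_Se c) v ->
    (forall x, cf_Se c' x <-> (cf_Se c x /\ x <> v)) ->
    ~ (exists u, adj v u /\ ~ occupied c u /\ cf_Se c' u) ->
    (forall q, q <> p -> cf_st c' q = forget_point v (cf_st c q)) ->
    cf_st c' p = forget_point v (mkPS v None Follower (ps_elig (cf_st c p)) false) ->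
    dle_step c p c'
| st_idle :
    ps_term (cf_st c p) = false ->
    ps_tail (cf_st c p) = None ->
    ps_status (cf_st c p) = Undecided ->
    (exists d, (d < 6)%nat /\ ps_elig (cf_st c p) d = true) ->
    ~ SCE (cf_Se c) (ps_head (cf_st c p)) ->
    c' = c -> dle_step c p c'.

Definition dle_initial {Part : Type} (c0 : Config Part) : Prop :=
  let S0 := occupied c0 in
  (forall p, ps_tail (cf_st c0 p) = None /\ ps_status (cf_st c0 p) = Undecided
             /\ ps_term (cf_st c0 p) = false) /\
  (forall p q, ps_head (cf_st c0 p) = ps_head (cf_st c0 q) -> p = q) /\
  (exists x, S0 x) /\ finite_shape S0 /\ connected S0 /\
  (forall p d, ps_elig (cf_st c0 p) d = true <-> ~ in_outer_face S0 (nbr (ps_head (cf_st c0 p)) d)) /\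
  (forall x, cf_Se c0 x <-> area S0 x).

Definition dle_execution {Part : Type} (c : nat -> Config Part) (a : nat -> Part) : Prop :=
  forall n, dle_step (c n) (a n) (c (S n)).

Definition fair {Part : Type} (a : nat -> Part) : Prop :=
  forall p n, exists m, (n <= m)%nat /\ a m = p.

Definition terminated {Part : Type} (c : Config Part) : Prop :=
  forall p, ps_term (cf_st c p) = true.

Definition eccentricity (S : shape) (l : Point) (e : nat) : Prop :=
  (exists u, S u /\ is_dist l u e) /\
  (forall u d, S u -> is_dist l u d -> (d <= e)%nat).

(* Main.v *)
Require Import Defs.
From Stdlib Require Import ZArith Arith Lia Classical.


Definition hd (a b : Point) : Z :=
  Z.max (Z.abs (fst b - fst a)) (Z.max (Z.abs (snd b - snd a)) (Z.abs (fst b - fst a + (snd b - snd a)))).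

Lemma nbr_eq6 : forall x d, (d < 6)%nat ->
  nbr x d = (fst x + fst (dvec d), snd x + snd (dvec d))%Z.
Proof. intros x d _. reflexivity. Qed.

Lemma nbr_mod : forall x d, nbr x (d mod 6) = nbr x d.
Proof. intros. unfold nbr, dvec. rewrite Nat.Div0.mod_mod by lia. reflexivity. Qed.

Lemma adj_nbr : forall x d, adj x (nbr x d).
Proof. intros. exists (d mod 6)%nat. split. apply Nat.mod_upper_bound; lia. now rewrite nbr_mod. Qed.

Ltac dcases d :=
  do 6 (destruct d as [|d]; [|]); [..|lia].

Lemma nbr_back : forall x d, (d < 6)%nat -> nbr (nbr x d) (d + 3) = x.
Proof.
  intros x d Hd. destruct x as [x1 x2].
  do 6 (destruct d as [|d]; [unfold nbr, padd, dvec; simpl; f_equal; lia|]). lia.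
Qed.

Lemma adj_sym : forall x y, adj x y -> adj y x.
Proof. intros x y [d [Hd ->]]. rewrite <- (nbr_back x d Hd) at 2. apply adj_nbr. Qed.

Lemma adj_irrefl : forall x, ~ adj x x.
Proof.
  intros [x1 x2] [d [Hd H]].
  do 6 (destruct d as [|d]; [unfold nbr, padd, dvec in H; simpl in H; injection H; lia|]). lia.
Qed.

Lemma adj_hd : forall l x y, adj x y -> (hd l y <= hd l x + 1 /\ hd l x <= hd l y + 1)%Z.
Proof.
  intros l [x1 x2] y [d [Hd ->]]. destruct l as [l1 l2].
  do 6 (destruct d as [|d]; [unfold hd, nbr, padd, dvec; simpl; lia|]). lia.
Qed.

Lemma hd_sym : forall a b, hd a b = hd b a.
Proof. intros [a1 a2] [b1 b2]. unfold hd; simpl. lia. Qed.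

Lemma hd_nonneg : forall a b, (0 <= hd a b)%Z.
Proof. intros [a1 a2] [b1 b2]. unfold hd; simpl. lia. Qed.

Lemma hd_zero : forall a b, hd a b = 0%Z -> a = b.
Proof. intros [a1 a2] [b1 b2] H. unfold hd in H; simpl in H. f_equal; lia. Qed.

Lemma hd_self : forall a, hd a a = 0%Z.
Proof. intros [a1 a2]. unfold hd; simpl. lia. Qed.

Lemma closer : forall a b, (0 < hd a b)%Z -> exists d, (d < 6)%nat /\ hd (nbr a d) b = (hd a b - 1)%Z.
Proof.
  intros [a1 a2] [b1 b2] H. unfold hd in *; simpl in *.
  assert (C: ((b1 - a1 > 0 /\ b2 - a2 >= 0) \/ (b1-a1 > 0 /\ b2 - a2 < 0 /\ b1-a1+(b2-a2) >= 0)
     \/ (b1 - a1 >= 0 /\ b2 - a2 < 0 /\ b1-a1+(b2-a2) < 0) \/ (b1 - a1 < 0 /\ b2 - a2 <= 0)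
     \/ (b1 - a1 < 0 /\ b2 - a2 > 0 /\ b1-a1+(b2-a2) <= 0) \/ (b1 - a1 <= 0 /\ b2 - a2 > 0 /\ b1-a1+(b2-a2) > 0))%Z) by lia.
  destruct C as [C|[C|[C|[C|[C|C]]]]];
  [exists 0%nat|exists 1%nat|exists 2%nat|exists 3%nat|exists 4%nat|exists 5%nat];
  (split; [lia|]); unfold nbr, padd, dvec; simpl; lia.
Qed.

Lemma farther : forall l u, exists d1 d2, (d1 < 6)%nat /\ (d2 < 6)%nat /\ d1 <> d2 /\
  hd l (nbr u d1) = (hd l u + 1)%Z /\ hd l (nbr u d2) = (hd l u + 1)%Z.
Proof.
  intros [a1 a2] [b1 b2]. unfold hd in *; simpl in *.
  assert (C: ((b1 - a1 >= 0 /\ b2 - a2 >= 0) \/ (b1-a1 > 0 /\ b2 - a2 < 0 /\ b1-a1+(b2-a2) >= 0)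
     \/ (b1 - a1 > 0 /\ b2 - a2 < 0 /\ b1-a1+(b2-a2) < 0) \/ (b1 - a1 <= 0 /\ b2 - a2 <= 0)
     \/ (b1 - a1 < 0 /\ b2 - a2 > 0 /\ b1-a1+(b2-a2) <= 0) \/ (b1 - a1 < 0 /\ b2 - a2 > 0 /\ b1-a1+(b2-a2) > 0))%Z) by lia.
  destruct C as [C|[C|[C|[C|[C|C]]]]];
  [exists 0%nat, 5%nat|exists 0%nat, 1%nat|exists 2%nat, 1%nat|exists 3%nat, 2%nat|exists 3%nat, 4%nat|exists 5%nat, 4%nat];
  (split; [lia|]); (split; [lia|]); (split; [lia|]); unfold nbr, padd, dvec; simpl; lia.
Qed.

Definition ray (x : Point) (d : nat) (k : nat) : Point := Nat.iter k (fun y => nbr y d) x.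

Lemma ray_S : forall x d k, ray x d (S k) = nbr (ray x d k) d.
Proof. reflexivity. Qed.

Lemma ray_closed : forall x d k,
  ray x d k = (fst x + Z.of_nat k * fst (dvec d), snd x + Z.of_nat k * snd (dvec d))%Z.
Proof.
  intros x d k. induction k as [|k IH].
  - destruct x; simpl; f_equal; lia.
  - rewrite ray_S, IH. unfold nbr, padd. simpl fst; simpl snd. rewrite Nat2Z.inj_succ, !Z.mul_succ_l. f_equal; ring.
Qed.

Lemma ray_away : forall l x, exists d, (d < 6)%nat /\ forall k, hd l (ray x d k) = (hd l x + Z.of_nat k)%Z.
Proof.
  intros [a1 a2] [b1 b2].
  assert (C: ((b1 - a1 >= 0 /\ b2 - a2 >= 0) \/ (b1-a1 > 0 /\ b2 - a2 < 0)
     \/ (b1 - a1 <= 0 /\ b2 - a2 <= 0) \/ (b1 - a1 < 0 /\ b2 - a2 > 0))%Z) by lia.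
  destruct C as [C|[C|[C|C]]]; [exists 0%nat|exists 1%nat|exists 3%nat|exists 4%nat];
  (split; [lia|]); intro k; rewrite ray_closed; unfold hd, dvec; simpl; lia.
Qed.

Lemma hd_pnorm : forall l r, (hd l r <= pnorm l + pnorm r)%Z.
Proof. intros [a1 a2] [b1 b2]. unfold hd, pnorm; simpl. lia. Qed.

Lemma walk_hd : forall a b n, walk a b n -> (hd a b <= Z.of_nat n)%Z.
Proof.
  intros a b n W. induction W.
  - rewrite hd_self. lia.
  - pose proof (adj_hd z x y H) as [H1 H2]. rewrite (hd_sym x z), (hd_sym y z) in *. lia.
Qed.

Lemma walk_exists : forall n a b, hd a b = Z.of_nat n -> walk a b n.
Proof.
  induction n as [|n IH]; intros a b H.
  - simpl in H. apply hd_zero in H. subst. constructor.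
  - destruct (closer a b) as [d [Hd H']]; [lia|].
    apply walk_cons with (nbr a d). exists d; auto. apply IH. lia.
Qed.

Lemma is_dist_hd : forall a b d, is_dist a b d <-> Z.of_nat d = hd a b.
Proof.
  intros a b d. split.
  - intros [W M]. pose proof (walk_hd _ _ _ W).
    pose proof (hd_nonneg a b).
    assert (walk a b (Z.to_nat (hd a b))) by (apply walk_exists; lia).
    specialize (M _ H1). lia.
  - intros H. split. apply walk_exists; auto.
    intros d' W. apply walk_hd in W. lia.
Qed.


Lemma path_in_start : forall S x y, path_in S x y -> S x.
Proof. intros S x y H. destruct H; auto. Qed.
Lemma path_in_end : forall S x y, path_in S x y -> S y.
Proof. intros S x y H. induction H; auto. Qed.

Lemma path_in_trans : forall S x y z, path_in S x y -> path_in S y z -> path_in S x z.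
Proof. intros S x y z H. induction H; intros; auto. eapply path_in_step; eauto. Qed.

Lemma path_in_snoc : forall S x y z, path_in S x y -> adj y z -> S z -> path_in S x z.
Proof.
  intros S x y z H A Sz. eapply path_in_trans; [exact H|]. eapply path_in_step; [eapply path_in_end; exact H|exact A|now constructor].
Qed.

Lemma path_in_sym : forall S x y, path_in S x y -> path_in S y x.
Proof.
  intros S x y H. induction H. now constructor.
  eapply path_in_snoc; eauto. now apply adj_sym. 
Qed.

Lemma path_in_mono : forall (S S' : shape) x y, (forall z, S z -> S' z) -> path_in S x y -> path_in S' x y.
Proof. intros S S' x y HS H. induction H. constructor; auto. eapply path_in_step; eauto. Qed.

Lemma path_ivt : forall S l a b i, path_in S a b -> (hd l a <= i <= hd l b)%Z ->
  exists y, S y /\ hd l y = i.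
Proof.
  intros S l a b i H. induction H; intros Hi.
  - exists x. split; auto. lia.
  - destruct (Z.eq_dec (hd l x) i). exists x; auto.
    apply IHpath_in. pose proof (adj_hd l x y H0). lia.
Qed.

Lemma remove_redundant : forall (S : shape) v, redundant S v ->
  forall x y, path_in S x y -> y <> v ->
   (x <> v -> path_in (fun z => S z /\ z <> v) x y) /\
   (x = v -> forall a, S a -> adj v a -> path_in (fun z => S z /\ z <> v) a y).
Proof.
  intros S v R x y H. induction H as [x Sx|x y' z Sx Axy H IH]; intros Hz.
  - split. intros. constructor. auto. intros ->. congruence.
  - specialize (IH Hz) as [IH1 IH2]. 
    assert (Sy : S y') by (eapply path_in_start; eauto).
    split.
    + intros Hx. destruct (classic (y' = v)) as [->|Hy].
      * apply IH2; auto. now apply adj_sym.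
      * eapply path_in_step; eauto.
    + intros ->. intros a Sa Aa.
      assert (Hy : y' <> v) by (intros ->; eapply adj_irrefl; eauto).
      apply path_in_trans with y'; auto.
      apply (path_in_mono (fun z => S z /\ adj v z)).
      intros w [Sw Aw]. split; auto. intros ->. eapply adj_irrefl; eauto.
      apply R; split; auto.
Qed.

Lemma connected_remove : forall (S : shape) v, connected S -> redundant S v ->
  connected (fun z => S z /\ z <> v).
Proof.
  intros S v C R x y [Sx Hx] [Sy Hy].
  destruct (remove_redundant S v R x y (C x y Sx Sy) Hy) as [H _]. apply H; auto.
Qed.

Lemma connected_ext : forall (S S' : shape), (forall x, S' x <-> S x) -> connected S -> connected S'.
Proof.
  intros S S' E C x y Hx Hy. apply E in Hx. apply E in Hy.
  apply (path_in_mono S). intros; now apply E. auto.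
Qed.

Lemma outer_back : forall (S : shape) p q, path_in (fun x => ~ S x) p q -> in_outer_face S q -> in_outer_face S p.
Proof.
  intros S p q H [Hq F]. split. apply (path_in_start _ _ _ H).
  intro n. destruct (F n) as [r [Hr Hn]]. exists r. split; auto. eapply path_in_trans; eauto.
Qed.

Lemma ray_path : forall (S : shape) x d k, (forall j, (j <= k)%nat -> S (ray x d j)) -> path_in S x (ray x d k).
Proof.
  intros S x d k. induction k as [|k IH]; intros H.
  - constructor. apply (H 0%nat). lia.
  - apply path_in_snoc with (ray x d k). apply IH. intros; apply H; lia.
    rewrite ray_S. apply adj_nbr. apply H; lia.
Qed.

Lemma far_outer : forall (S : shape) l x e, (forall u, S u -> (hd l u <= e)%Z) -> (e < hd l x)%Z ->
  in_outer_face S x.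
Proof.
  intros S l x e HS Hx. destruct (ray_away l x) as [d [Hd Hr]].
  assert (NS : forall k, ~ S (ray x d k)). { intros k Hk. apply HS in Hk. rewrite Hr in Hk. lia. }
  split. { pose proof (NS 0%nat). simpl in H. auto. }
  intro n. exists (ray x d (Z.to_nat (Z.abs n + pnorm l))). split.
  apply ray_path. intros; apply NS.
  pose proof (hd_pnorm l (ray x d (Z.to_nat (Z.abs n + pnorm l)))). rewrite Hr in H.
  pose proof (hd_nonneg l x). assert (0 <= pnorm l)%Z by (unfold pnorm; lia). lia.
Qed.

Lemma area_hole_path : forall (S : shape) h, area S h -> exists y, S y /\ path_in (area S) h y.
Proof.
  intros S h [Sh|[NSh NO]].
  - exists h. split; auto. constructor. now left.
  - assert (Dich : forall k, (forall j, (j <= k)%nat -> ~ S (ray h 0 j)) \/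
        (exists j, (j <= k)%nat /\ S (ray h 0 j) /\ forall j', (j' < j)%nat -> ~ S (ray h 0 j'))).
    { induction k as [|k IH].
      - left. intros j Hj. assert (j = 0%nat) by lia. subst. simpl. auto.
      - destruct IH as [IH|IH].
        + destruct (classic (S (ray h 0 (Datatypes.S k)))) as [Hs|Hs].
          * right. exists (Datatypes.S k). repeat split; auto. intros; apply IH; lia.
          * left. intros j Hj. destruct (Nat.eq_dec j (Datatypes.S k)). subst; auto. apply IH; lia.
        + right. destruct IH as [j [? ?]]. exists j. split; [lia|auto]. }
    destruct (classic (exists k, S (ray h 0 k))) as [[k Hk]|Hnk].
    + destruct (Dich k) as [D|[j [Hj [Sj Mj]]]]. { exfalso. apply (D k); auto. }
      exists (ray h 0 j). split; auto.
      destruct j as [|j]. { constructor. now left. }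
      apply path_in_snoc with (ray h 0 j). 
      * apply ray_path. intros j' Hj'. right. split. apply Mj; lia.
        intro O. apply NO. apply (outer_back S h (ray h 0 j')); auto.
        apply ray_path. intros; apply Mj; lia.
      * rewrite ray_S. apply adj_nbr.
      * now left.
    + exfalso. apply NO. split; auto. intro n.
      exists (ray h 0 (Z.to_nat (Z.abs n + pnorm h))). split.
      apply ray_path. intros j _ Hj. apply Hnk. eauto.
      rewrite ray_closed. unfold pnorm, dvec. simpl. lia.
Qed.

Lemma area_connected : forall S, connected S -> connected (area S).
Proof.
  intros S C x y Hx Hy.
  destruct (area_hole_path S x Hx) as [x' [Sx Px]].
  destruct (area_hole_path S y Hy) as [y' [Sy Py]].
  eapply path_in_trans. apply Px. eapply path_in_trans. 2: apply path_in_sym, Py.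
  apply (path_in_mono S). intros; now left. auto.
Qed.

Lemma area_nbr_hole : forall (S : shape) w d, area S w -> ~ S w -> area S (nbr w d).
Proof.
  intros S w d [Sw|[NSw NO]] NS. contradiction.
  destruct (classic (S (nbr w d))). now left. right. split; auto.
  intro O. apply NO. apply (outer_back S w (nbr w d)); auto.
  eapply path_in_step; eauto. apply adj_nbr. now constructor.
Qed.


Lemma nbr_nbr1 : forall v d, (d < 6)%nat -> nbr (nbr v d) (d + 2) = nbr v (d + 1).
Proof.
  intros [x1 x2] d Hd.
  do 6 (destruct d as [|d]; [unfold nbr, padd, dvec; simpl; f_equal; lia|]). lia.
Qed.
Lemma nbr_nbr2 : forall v d, (d < 6)%nat -> nbr (nbr v d) (d + 4) = nbr v (d + 5).
Proof.
  intros [x1 x2] d Hd.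
  do 6 (destruct d as [|d]; [unfold nbr, padd, dvec; simpl; f_equal; lia|]). lia.
Qed.

Lemma sce_unique_hole : forall (Se : shape) v w u, SCE Se v -> adj v w -> adj v u -> w <> u ->
  Se w -> Se u -> (forall d, Se (nbr w d)) -> (forall d, Se (nbr u d)) -> False.
Proof.
  intros Se v w u [_ [i [k [[Hi [Hk [Hout _]]] Hk3]]]] [dw [Hdw ->]] [du [Hdu ->]] Hne Sw Su Hw Hu.
  pose proof (Hout 0%nat ltac:(lia)) as O0.
  pose proof (Hout 1%nat ltac:(lia)) as O1.
  pose proof (Hout 2%nat ltac:(lia)) as O2.
  clear Hout.
  pose proof (Hw (dw + 2)%nat) as W1. rewrite nbr_nbr1 in W1 by auto.
  pose proof (Hw (dw + 4)%nat) as W2. rewrite nbr_nbr2 in W2 by auto.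
  pose proof (Hu (du + 2)%nat) as U1. rewrite nbr_nbr1 in U1 by auto.
  pose proof (Hu (du + 4)%nat) as U2. rewrite nbr_nbr2 in U2 by auto.
  clear Hw Hu. destruct v as [v1 v2].
  destruct dw as [|[|[|[|[|[|dw]]]]]]; try lia;
  destruct du as [|[|[|[|[|[|du]]]]]]; try lia;
  destruct i as [|[|[|[|[|[|i]]]]]]; try lia;
  unfold nbr, dvec, padd in *; simpl in *; tauto.
Qed.


Lemma peqb_true : forall x y, peqb x y = true -> x = y.
Proof.
  intros [x1 x2] [y1 y2] H. unfold peqb in H; simpl in H.
  apply andb_prop in H as [H1 H2]. apply Z.eqb_eq in H1, H2. subst; auto.
Qed.


Record Inv {Part : Type} (A : shape) (c : Config Part) : Prop := {
  i_excl : forall p q x, p <> q -> occupies (cf_st c p) x -> occupies (cf_st c q) x -> False;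
  i_tail : forall p x, ps_tail (cf_st c p) = Some x -> ~ cf_Se c x;
  i_term : forall p, ps_term (cf_st c p) = true -> ps_tail (cf_st c p) = None;
  i_und : forall p, ps_status (cf_st c p) = Undecided -> cf_Se c (ps_head (cf_st c p));
  i_elig : forall p d, ps_elig (cf_st c p) d = false -> ~ cf_Se c (nbr (ps_head (cf_st c p)) d);
  i_conn : connected (cf_Se c);
  i_hole : forall w, cf_Se c w -> ~ occupied c w -> forall d, cf_Se c (nbr w d);
  i_occA : forall p x, occupies (cf_st c p) x -> A x;
  i_SeA : forall x, cf_Se c x -> A x }.

Lemma Inv_init {Part : Type} : forall c0 : Config Part, dle_initial c0 -> Inv (area (occupied c0)) c0.
Proof.
  intros c0 [Hst [Hinj [Hne [Hfin [Hconn [Hel HSe]]]]]].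
  assert (Hocc : forall p x, occupies (cf_st c0 p) x -> x = ps_head (cf_st c0 p)).
  { intros p x [H|H]. auto. destruct (Hst p) as [Ht _]. congruence. }
  constructor.
  - intros p q x Hpq Hp Hq. apply Hocc in Hp, Hq. apply Hpq, Hinj. congruence.
  - intros p x H. destruct (Hst p) as [Ht _]. congruence.
  - intros p H. destruct (Hst p) as [_ [_ Ht]]. congruence.
  - intros p _. apply HSe. left. exists p. now left.
  - intros p d H. intro Hs. apply HSe in Hs.
    assert (O : in_outer_face (occupied c0) (nbr (ps_head (cf_st c0 p)) d)).
    { apply NNPP. intro N. apply Hel in N. congruence. }
    destruct Hs as [Hs|[_ Hs]]. apply O in Hs; auto. auto.
  - apply connected_ext with (area (occupied c0)). apply HSe.
    apply area_connected. auto.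
  - intros w Hw Hno d. apply HSe. apply HSe in Hw. apply area_nbr_hole; auto.
  - intros p x H. left. exists p. auto.
  - intros x H. apply HSe. auto.
Qed.

Lemma occ_other {Part : Type} : forall (c c' : Config Part) p q, q <> p -> others_same c c' p ->
  cf_st c' q = cf_st c q.
Proof. intros. apply H0. auto. Qed.

Lemma Inv_step {Part : Type} : forall A (c c' : Config Part) p, Inv A c -> dle_step c p c' -> Inv A c'.
Proof.
  intros A c c' p I H. destruct H; unfold same_Se, others_same in *.
  - subst; auto.
  -
    rename H1 into Hoth, H2 into HSe, H3 into Hp.
    assert (Hq : forall q, q <> p -> cf_st c' q = cf_st c q) by (intros; apply Hoth; auto).
    assert (Sub : forall q x, occupies (cf_st c' q) x -> occupies (cf_st c q) x).
    { intros q x Ho. destruct (classic (q = p)) as [->|Hn].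
      - rewrite Hp in Ho. destruct Ho as [Ho|Ho]; simpl in Ho. now left. discriminate.
      - rewrite Hq in Ho; auto. }
    assert (Hd : forall q, ps_head (cf_st c' q) = ps_head (cf_st c q) /\ ps_elig (cf_st c' q) = ps_elig (cf_st c q)
       /\ ps_status (cf_st c' q) = ps_status (cf_st c q)).
    { intros q. destruct (classic (q = p)) as [->|Hn]. rewrite Hp; simpl; auto. rewrite Hq; auto. }
    constructor.
    + intros p1 q1 x Hpq Ha Hb. eapply (i_excl _ _ I p1 q1 x); eauto.
    + intros q x Ht. rewrite HSe. destruct (classic (q = p)) as [->|Hn].
      rewrite Hp in Ht; discriminate. rewrite Hq in Ht; auto. eapply i_tail; eauto.
    + intros q Ht. destruct (classic (q = p)) as [->|Hn]. rewrite Hp in *; simpl in *; congruence.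
      rewrite Hq in Ht by auto. rewrite Hq by auto. eapply i_term; eauto.
    + intros q Hs. rewrite HSe. destruct (Hd q) as [-> [_ Hs']]. rewrite Hs' in Hs. eapply i_und; eauto.
    + intros q d He. rewrite HSe. destruct (Hd q) as [-> [He' _]]. rewrite He' in He. eapply i_elig; eauto.
    + eapply connected_ext. apply HSe. apply (i_conn _ _ I).
    + intros w Hw Hno d. apply HSe. apply HSe in Hw. apply (i_hole _ _ I); auto.
      intros [q Hoq]. apply Hno. destruct (classic (q = p)) as [->|Hn].
      * destruct Hoq as [Ho|Ho]. exists p. rewrite Hp. now left.
        exfalso. rewrite H0 in Ho. injection Ho as E. subst. eapply (i_tail _ _ I); eauto.
      * exists q. rewrite Hq; auto.
    + intros q x Ho. eapply (i_occA _ _ I). eauto.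
    + intros x Hx. apply HSe in Hx. eapply (i_SeA _ _ I); eauto.
  -
    rename H3 into Hoth, H4 into HSe, H5 into Hp.
    assert (Hq : forall q, q <> p -> cf_st c' q = cf_st c q) by (intros; apply Hoth; auto).
    assert (Eq : forall q x, occupies (cf_st c' q) x <-> occupies (cf_st c q) x).
    { intros q x. destruct (classic (q = p)) as [->|Hn].
      - rewrite Hp. unfold occupies; simpl. rewrite H0. tauto.
      - rewrite Hq; auto. tauto. }
    assert (Hd : forall q, ps_head (cf_st c' q) = ps_head (cf_st c q) /\ ps_elig (cf_st c' q) = ps_elig (cf_st c q)
       /\ ps_status (cf_st c' q) = ps_status (cf_st c q) /\ ps_tail (cf_st c' q) = ps_tail (cf_st c q)).
    { intros q. destruct (classic (q = p)) as [->|Hn]. rewrite Hp; simpl; auto. rewrite Hq; auto. }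
    constructor.
    + intros p1 q1 x Hpq Ha Hb. apply Eq in Ha, Hb. eapply (i_excl _ _ I p1 q1 x); eauto.
    + intros q x Ht. rewrite HSe. destruct (Hd q) as [_ [_ [_ E]]]. rewrite E in Ht. eapply i_tail; eauto.
    + intros q Ht. destruct (classic (q = p)) as [->|Hn]. rewrite Hp; simpl; auto.
      rewrite Hq in Ht by auto. rewrite Hq by auto. eapply i_term; eauto.
    + intros q Hs. rewrite HSe. destruct (Hd q) as [-> [_ [Hs' _]]]. rewrite Hs' in Hs. eapply i_und; eauto.
    + intros q d He. rewrite HSe. destruct (Hd q) as [-> [He' _]]. rewrite He' in He. eapply i_elig; eauto.
    + eapply connected_ext. apply HSe. apply (i_conn _ _ I).
    + intros w Hw Hno d. apply HSe. apply HSe in Hw. apply (i_hole _ _ I); auto.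
      intros [q Hoq]. apply Hno. exists q. apply Eq; auto.
    + intros q x Ho. apply Eq in Ho. eapply (i_occA _ _ I). eauto.
    + intros x Hx. apply HSe in Hx. eapply (i_SeA _ _ I); eauto.
  - subst; auto.
  -
    rename H3 into Hoth, H4 into HSe, H5 into Hp.
    assert (Hq : forall q, q <> p -> cf_st c' q = cf_st c q) by (intros; apply Hoth; auto).
    assert (Eq : forall q x, occupies (cf_st c' q) x <-> occupies (cf_st c q) x).
    { intros q x. destruct (classic (q = p)) as [->|Hn].
      - rewrite Hp. unfold occupies; simpl. rewrite H0. tauto.
      - rewrite Hq; auto. tauto. }
    assert (Hd : forall q, ps_head (cf_st c' q) = ps_head (cf_st c q) /\ ps_elig (cf_st c' q) = ps_elig (cf_st c q)
       /\ ps_tail (cf_st c' q) = ps_tail (cf_st c q)).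
    { intros q. destruct (classic (q = p)) as [->|Hn]. rewrite Hp; simpl; auto. rewrite Hq; auto. }
    constructor.
    + intros p1 q1 x Hpq Ha Hb. apply Eq in Ha, Hb. eapply (i_excl _ _ I p1 q1 x); eauto.
    + intros q x Ht. rewrite HSe. destruct (Hd q) as [_ [_ E]]. rewrite E in Ht. eapply i_tail; eauto.
    + intros q Ht. destruct (classic (q = p)) as [->|Hn]. rewrite Hp in *; simpl in *; congruence.
      rewrite Hq in Ht by auto. rewrite Hq by auto. eapply i_term; eauto.
    + intros q Hs. rewrite HSe. destruct (classic (q = p)) as [->|Hn]. rewrite Hp in Hs; discriminate.
      rewrite Hq in Hs by auto. rewrite Hq by auto. eapply i_und; eauto.
    + intros q d He. rewrite HSe. destruct (Hd q) as [-> [He' _]]. rewrite He' in He. eapply i_elig; eauto.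
    + eapply connected_ext. apply HSe. apply (i_conn _ _ I).
    + intros w Hw Hno d. apply HSe. apply HSe in Hw. apply (i_hole _ _ I); auto.
      intros [q Hoq]. apply Hno. exists q. apply Eq; auto.
    + intros q x Ho. apply Eq in Ho. eapply (i_occA _ _ I). eauto.
    + intros x Hx. apply HSe in Hx. eapply (i_SeA _ _ I); eauto.
  -
    rename H3 into Hsce, H4 into HSe, H5 into Huv, H6 into Hnu, H7 into Hu, H8 into Hq, H9 into Hp.
    assert (Hv : occupies (cf_st c p) v) by (now left).
    assert (Sv : cf_Se c v) by (apply Hsce).
    assert (Sub : forall x, occupied c x -> occupied c' x).
    { intros x [q Ho]. destruct (classic (q = p)) as [->|Hn].
      - destruct Ho as [Ho|Ho]; [|congruence]. exists p. rewrite Hp. right. simpl. f_equal. auto.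
      - exists q. rewrite Hq; auto. }
    assert (Hotherhead : forall q, q <> p -> ps_head (cf_st c q) <> v).
    { intros q Hn E. apply (i_excl _ _ I q p v); auto. now left. }
    constructor.
    + intros p1 q1 x Hpq Ha Hb.
      assert (Gen : forall p2, p2 <> p -> occupies (cf_st c' p) x -> occupies (cf_st c' p2) x -> False).
      { intros p2 Hn2 Hx1 Hx2. rewrite Hq in Hx2 by auto. unfold forget_point, occupies in Hx2; simpl in Hx2.
        rewrite Hp in Hx1. destruct Hx1 as [Hx1|Hx1]; simpl in Hx1.
        - subst. apply Hnu. exists p2. auto.
        - injection Hx1 as <-. apply (i_excl _ _ I p2 p v); auto. }
      destruct (classic (p1 = p)) as [->|Hn1]. eapply Gen; eauto.
      destruct (classic (q1 = p)) as [->|Hn2]. eapply Gen; eauto.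
      rewrite Hq in Ha, Hb by auto. apply (i_excl _ _ I p1 q1 x); auto.
    + intros q x Ht. intro Hs. apply HSe in Hs as [Hs Hxv]. destruct (classic (q = p)) as [->|Hn].
      * rewrite Hp in Ht. simpl in Ht. congruence.
      * rewrite Hq in Ht; auto. simpl in Ht. eapply (i_tail _ _ I); eauto.
    + intros q Ht. destruct (classic (q = p)) as [->|Hn]. rewrite Hp in Ht; simpl in Ht; congruence.
      rewrite Hq in Ht by auto. rewrite Hq by auto. simpl in *. eapply i_term; eauto.
    + intros q Hs. destruct (classic (q = p)) as [->|Hn]. rewrite Hp. simpl. auto.
      rewrite Hq in Hs by auto. rewrite Hq by auto. simpl in *. apply HSe. split. eapply i_und; eauto. apply Hotherhead; auto.
    + intros q d He Hs. apply HSe in Hs as [Hs Hne]. destruct (classic (q = p)) as [->|Hn].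
      * rewrite Hp in He, Hs, Hne. simpl in *. destruct (peqb (nbr u d) v) eqn:E; simpl in He; try discriminate.
        apply peqb_true in E. auto.
      * rewrite Hq in He, Hs, Hne by auto. simpl in *. destruct (peqb (nbr (ps_head (cf_st c q)) d) v) eqn:E.
        apply peqb_true in E. auto. eapply (i_elig _ _ I); eauto.
    + eapply connected_ext. apply HSe. apply connected_remove. apply (i_conn _ _ I). apply Hsce.
    + intros w Hw Hno d. apply HSe in Hw as [Hw Hwv]. apply HSe. split.
      * apply (i_hole _ _ I); auto.
      * intros E. assert (Hwu : w <> u). { intros ->. apply Hno. exists p. rewrite Hp. now left. }
        apply (sce_unique_hole (cf_Se c) v w u); auto.
        rewrite <- E. apply adj_sym, adj_nbr.
        apply HSe in Hu; tauto. apply (i_hole _ _ I); auto.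
        apply (i_hole _ _ I); auto. apply HSe in Hu; tauto.
    + intros q x Ho. destruct (classic (q = p)) as [->|Hn].
      * rewrite Hp in Ho. destruct Ho as [Ho|Ho]; simpl in Ho.
        subst. apply (i_SeA _ _ I). apply HSe in Hu; tauto.
        injection Ho as <-. eapply (i_occA _ _ I); eauto.
      * rewrite Hq in Ho by auto. apply (i_occA _ _ I q). exact Ho.
    + intros x Hx. apply HSe in Hx. eapply (i_SeA _ _ I); tauto.
  -
    rename H3 into Hsce, H4 into HSe, H5 into Hnou, H6 into Hq, H7 into Hp.
    assert (Sv : cf_Se c v) by (apply Hsce).
    assert (Eq : forall q x, occupies (cf_st c' q) x <-> occupies (cf_st c q) x).
    { intros q x. destruct (classic (q = p)) as [->|Hn].
      - rewrite Hp. unfold occupies, forget_point; simpl. rewrite H0. tauto.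
      - rewrite Hq; auto. unfold occupies, forget_point; simpl. tauto. }
    assert (Hotherhead : forall q, q <> p -> ps_head (cf_st c q) <> v).
    { intros q Hn E. apply (i_excl _ _ I q p v); auto; now left. }
    assert (Hhd : forall q, ps_head (cf_st c' q) = ps_head (cf_st c q)).
    { intros q. destruct (classic (q = p)) as [->|Hn]. rewrite Hp; reflexivity. rewrite Hq; auto. }
    assert (Hel : forall q d, ps_elig (cf_st c' q) d = false -> ps_elig (cf_st c q) d = false \/ nbr (ps_head (cf_st c q)) d = v).
    { intros q d. destruct (classic (q = p)) as [->|Hn]; [rewrite Hp|rewrite Hq by auto]; simpl;
      destruct (peqb _ v) eqn:E; auto using peqb_true. }
    constructor.
    + intros p1 q1 x Hpq Ha Hb. apply Eq in Ha, Hb. eapply (i_excl _ _ I p1 q1 x); eauto.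
    + intros q x Ht Hs. apply HSe in Hs as [Hs _]. destruct (classic (q = p)) as [->|Hn].
      rewrite Hp in Ht; discriminate. rewrite Hq in Ht by auto. simpl in Ht. eapply (i_tail _ _ I q); eauto.
    + intros q Ht. destruct (classic (q = p)) as [->|Hn]. rewrite Hp in Ht; simpl in Ht; congruence.
      rewrite Hq in Ht by auto. rewrite Hq by auto. simpl in *. eapply i_term; eauto.
    + intros q Hs. destruct (classic (q = p)) as [->|Hn]. rewrite Hp in Hs. discriminate.
      rewrite Hq in Hs by auto. rewrite Hq by auto. simpl in *. apply HSe. split. eapply i_und; eauto. apply Hotherhead; auto.
    + intros q d He Hs. apply HSe in Hs as [Hs Hne]. rewrite Hhd in *. destruct (Hel q d He) as [E|E]; auto.
      eapply (i_elig _ _ I); eauto.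
    + eapply connected_ext. apply HSe. apply connected_remove. apply (i_conn _ _ I). apply Hsce.
    + intros w Hw Hno d. apply HSe. assert (Hw' := Hw). apply HSe in Hw as [Hw Hwv]. split.
      * apply (i_hole _ _ I); auto. intros [q Ho]. apply Hno. exists q. apply Eq. auto.
      * intros E. apply Hnou. exists w. split. rewrite <- E. apply adj_sym, adj_nbr. split; auto.
        intros [q Ho]. apply Hno. exists q. apply Eq. auto.
    + intros q x Ho. apply Eq in Ho. eapply (i_occA _ _ I). eauto.
    + intros x Hx. apply HSe in Hx. eapply (i_SeA _ _ I); tauto.
  - subst; auto.
Qed.



Lemma transition : forall (P : nat -> Prop) n, P 0%nat -> ~ P n -> exists s, (s < n)%nat /\ P s /\ ~ P (S s).
Proof.
  intros P n H0. induction n as [|n IH]; intros Hn. contradiction.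
  destruct (classic (P n)) as [Hp|Hp].
  - exists n. auto.
  - destruct (IH Hp) as [s [? ?]]. exists s. split; [lia|auto].
Qed.

Lemma nbr_inj : forall u d1 d2, (d1 < 6)%nat -> (d2 < 6)%nat -> nbr u d1 = nbr u d2 -> d1 = d2.
Proof.
  intros [u1 u2] d1 d2 H1 H2 E.
  destruct d1 as [|[|[|[|[|[|d1]]]]]]; try lia;
  destruct d2 as [|[|[|[|[|[|d2]]]]]]; try lia;
  unfold nbr, padd, dvec in E; simpl in E; injection E; lia.
Qed.

Lemma path_first : forall (S : shape) a b, path_in S a b -> a <> b -> exists y, adj a y /\ S y.
Proof.
  intros S a b H. destruct H. intros; congruence. intros _. exists y. split; auto.
  eapply path_in_start; eauto.
Qed.


Lemma step_other {Part : Type} : forall (c c' : Config Part) p q, dle_step c p c' -> q <> p ->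
  ps_head (cf_st c' q) = ps_head (cf_st c q) /\ ps_tail (cf_st c' q) = ps_tail (cf_st c q) /\
  ps_status (cf_st c' q) = ps_status (cf_st c q).
Proof.
  intros c c' p q H Hn. destruct H; unfold others_same in *; subst; auto;
  try (match goal with H : forall q, q <> p -> cf_st c' q = _ |- _ => rewrite H by auto end);
  simpl; auto.
Qed.

Lemma step_decided {Part : Type} : forall (c c' : Config Part) p q, dle_step c p c' -> ps_status (cf_st c q) <> Undecided ->
  ps_head (cf_st c' q) = ps_head (cf_st c q) /\ ps_status (cf_st c' q) = ps_status (cf_st c q).
Proof.
  intros c c' p q H Hd. destruct (classic (q = p)) as [->|Hn].
  - destruct H; unfold others_same in *; subst; auto; try congruence.
    match goal with H : cf_st c' p = _ |- _ => rewrite H end. simpl; auto.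
    match goal with H : cf_st c' p = _ |- _ => rewrite H end. simpl; auto.
  - destruct (step_other c c' p q H Hn) as [? [? ?]]. auto.
Qed.

Lemma step_leader {Part : Type} : forall (c c' : Config Part) p, dle_step c p c' ->
  ps_status (cf_st c p) <> Leader -> ps_status (cf_st c' p) = Leader ->
  ps_status (cf_st c p) = Undecided /\ (forall d, (d < 6)%nat -> ps_elig (cf_st c p) d = false) /\
  ps_head (cf_st c' p) = ps_head (cf_st c p) /\ (forall x, cf_Se c' x <-> cf_Se c x).
Proof.
  intros c c' p H Hn Hl. destruct H; unfold same_Se in *; subst; try congruence;
  match goal with H : cf_st c' p = _ |- _ => rewrite H in * end; simpl in *; try congruence.
  repeat split; auto; intros; match goal with H : forall x, cf_Se c' x <-> _ |- _ => apply H; auto end.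
Qed.

Lemma step_Se {Part : Type} : forall (c c' : Config Part) p, dle_step c p c' ->
  (forall x, cf_Se c' x <-> cf_Se c x) \/
  (let v := ps_head (cf_st c p) in
   (forall x, cf_Se c' x <-> cf_Se c x /\ x <> v) /\
   ((exists u, adj v u /\ ~ occupied c u /\ cf_Se c' u) \/
    (ps_status (cf_st c' p) = Follower /\ ps_head (cf_st c' p) = v /\ ps_tail (cf_st c' p) = None))).
Proof.
  intros c c' p H. destruct H; unfold same_Se in *; subst; try (left; tauto).
  - right. split; auto. left. exists u. auto.
  - right. split; auto. right. 
    match goal with H : cf_st c' p = _ |- _ => rewrite H end. simpl. auto.
Qed.

Lemma step_Se_mono {Part : Type} : forall (c c' : Config Part) p x, dle_step c p c' -> cf_Se c' x -> cf_Se c x.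
Proof.
  intros c c' p x H Hx. destruct (step_Se c c' p H) as [E|[E _]]; apply E in Hx; tauto.
Qed.


Theorem lemma4p10 (Part : Type) (c : nat -> Config Part) (a : nat -> Part) :
  dle_initial (c 0%nat) ->
  dle_execution c a ->
  fair a ->
  forall (T : nat) (pl : Part),
    terminated (c T) ->
    ps_status (cf_st (c T) pl) = Leader ->
    forall e : nat,
      eccentricity (occupied (c 0%nat)) (ps_head (cf_st (c T) pl)) e ->
      (forall i : nat, (i <= e)%nat ->
         exists q : Part, ps_tail (cf_st (c T) q) = None /\
                          is_dist (ps_head (cf_st (c T) pl)) (ps_head (cf_st (c T) q)) i) /\
      (forall (x : Point) (d : nat), occupied (c T) x ->
         is_dist (ps_head (cf_st (c T) pl)) x d -> (d <= e)%nat).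
Proof.
  intros Hinit Hexec _ T pl Hterm HL e [[u0 [Su0 Du0]] Hecc].
  set (S0 := occupied (c 0%nat)) in *.
  set (A := area S0).
  assert (I : forall n, Inv A (c n)).
  { induction n. apply Inv_init; auto. eapply Inv_step; eauto. }
  set (l := ps_head (cf_st (c T) pl)) in *.
  assert (Hecc' : forall u, S0 u -> (hd l u <= Z.of_nat e)%Z).
  { intros u Su. pose proof (hd_nonneg l u).
    assert (D : is_dist l u (Z.to_nat (hd l u))) by (apply is_dist_hd; lia).
    specialize (Hecc u _ Su D). lia. }
  assert (Tail : forall q, ps_tail (cf_st (c T) q) = None).
  { intros q. apply (i_term _ _ (I T)). apply Hterm. }
  assert (Stab : forall q n m, (n <= m)%nat -> ps_status (cf_st (c n) q) <> Undecided ->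
     ps_head (cf_st (c m) q) = ps_head (cf_st (c n) q) /\ ps_status (cf_st (c m) q) = ps_status (cf_st (c n) q)).
  { intros q n m Hnm Hd. induction Hnm. auto.
    destruct IHHnm as [E1 E2]. destruct (step_decided _ _ _ q (Hexec m)) as [F1 F2]. congruence. split; congruence. }
  assert (Mono : forall n m x, (n <= m)%nat -> cf_Se (c m) x -> cf_Se (c n) x).
  { intros n m x Hnm. induction Hnm; auto. intros H. apply IHHnm. eapply step_Se_mono; eauto. }
  split.
  2:{ intros x d [q Hq] Hd. apply is_dist_hd in Hd.
      assert (Ax : A x) by (eapply (i_occA _ _ (I T)); eauto).
      destruct (Z_le_gt_dec (hd l x) (Z.of_nat e)). lia. exfalso.
      assert (O : in_outer_face S0 x) by (apply (far_outer S0 l x (Z.of_nat e)); auto; lia).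
      destruct Ax as [Ax|[_ Ax]]. apply O in Ax; auto. auto. }
  (* the leader's election time *)
  destruct (transition (fun n => ps_status (cf_st (c n) pl) <> Leader) T) as [sL [HsL [N1 N2]]].
  { destruct Hinit as [Hst _]. destruct (Hst pl) as [_ [-> _]]. discriminate. }
  { tauto. }
  apply NNPP in N2.
  assert (EpL : a sL = pl).
  { apply NNPP. intro Hn. destruct (step_other _ _ _ pl (Hexec sL)) as [_ [_ E]]; auto. congruence. }
  assert (Hst : dle_step (c sL) pl (c (S sL))) by (rewrite <- EpL; apply Hexec).
  destruct (step_leader _ _ pl Hst) as [U [Eall [Eh ES]]]; auto.
  assert (Hl : ps_head (cf_st (c sL) pl) = l).
  { destruct (Stab pl (S sL) T) as [E _]; [lia | rewrite N2; discriminate | ]. unfold l. congruence. }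
  assert (lSe : cf_Se (c sL) l) by (rewrite <- Hl; eapply (i_und _ _ (I sL)); eauto).
  assert (Only : forall x, cf_Se (c sL) x -> x = l).
  { intros x Hx. apply NNPP. intros Hxl.
    destruct (path_first _ l x (i_conn _ _ (I sL) l x lSe Hx)) as [y [[d [Hd ->]] Hy]]. auto.
    apply (i_elig _ _ (I sL) pl d). apply Eall; auto. rewrite Hl. auto. }
  intros i Hi.
  destruct i as [|i'].
  { exists pl. split. apply Tail. apply is_dist_hd. rewrite hd_self. reflexivity. }
  set (i := S i') in *.
  set (Q := fun m => exists x, cf_Se (c m) x /\ (Z.of_nat i <= hd l x)%Z).
  destruct (transition Q sL) as [s [Hs [Qs NQs]]].
  { exists u0. split. destruct Hinit as [_ [_ [_ [_ [_ [_ HSe]]]]]]. apply HSe. now left.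
    apply is_dist_hd in Du0. lia. }
  { intros [x [Hx Hh]]. apply Only in Hx. subst x. rewrite hd_self in Hh. unfold i in Hh. lia. }
  destruct (step_Se _ _ _ (Hexec s)) as [E|[E Cases]].
  { exfalso. apply NQs. destruct Qs as [x [Hx Hh]]. exists x. split; auto. apply E; auto. }
  set (v := ps_head (cf_st (c s) (a s))) in *.
  assert (Vonly : forall x, cf_Se (c s) x -> (Z.of_nat i <= hd l x)%Z -> x = v).
  { intros x Hx Hh. apply NNPP. intro Hn. apply NQs. exists x. split; auto. apply E. auto. }
  assert (lSs : cf_Se (c s) l) by (apply (Mono s sL); auto; lia).
  destruct Qs as [x0 [Hx0 Hh0]].
  assert (Hv : hd l v = Z.of_nat i).
  { destruct (path_ivt _ l l x0 (Z.of_nat i) (i_conn _ _ (I s) l x0 lSs Hx0)) as [y [Hy Hyh]].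
    rewrite hd_self. lia. assert (y = v) by (apply Vonly; auto; lia). subst. auto. }
  destruct Cases as [[u [Auv [Hnu Hu]]]|[F1 [F2 F3]]].
  - exfalso. apply E in Hu as [Hu Huv].
    pose proof (i_hole _ _ (I s) u Hu Hnu) as Hnb.
    pose proof (adj_hd l v u Auv) as [B1 B2].
    destruct (Z_le_gt_dec (Z.of_nat i) (hd l u)).
    + apply Huv. apply Vonly; auto.
    + destruct (farther l u) as [d1 [d2 [Hd1 [Hd2 [Hne [H1 H2]]]]]].
      destruct (classic (nbr u d1 = v)) as [Ev|Ev].
      * apply Hne. apply (nbr_inj u); auto. assert (nbr u d2 = v) by (apply Vonly; auto; lia). congruence.
      * apply Ev. apply Vonly; auto. lia.
  - exists (a s). split. apply Tail.
    destruct (Stab (a s) (S s) T) as [Eh2 _]. lia. rewrite F1. discriminate.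
    rewrite Eh2, F2. apply is_dist_hd. auto.
Qed.
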